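(* Let $\mu_1:\mathrm{Sym}^-\to B_2$ be an arbitrary measure, fix $a\in\mathbb R\cup\{\infty\}$ and define $g:\mathbb R\cup\{\infty\}\to B_2$ by $g(t)=\mu_1([[a,t)))$. (a) $g$ is left continuous on $\mathbb R\cup\{\infty\}$: for every $t\in\mathbb R\cup\{\infty\}$ there exists a real $t'<t$ such that $g(\xi)=g(t)$ for all $\xi\in(t',t)$. (b) $\mu_1$ is the left Lebesgue–Stieltjes measure associated to $g$, i.e. $\mu_1\big([[a_1,b_1))\Delta\cdots\Delta[[a_n,b_n))\big)=g(a_1)\oplus g(b_1)\oplus\cdots\oplus g(a_n)\oplus g(b_n)$ for all $a_1,\dots,a_n,b_1,\dots,b_n\in\mathbb R\cup\{\infty\}$.
   Context: $B_2=\{0,1\}$, $\oplus$ addition modulo 2, $\Delta$ symmetric difference. For $a,b\in\mathbb R\cup\{\infty\}$: $[[a,b))=[a,b)$ if $a<b$, $[b,a)$ if $b<a$, $\emptyset$ if $a=b$. $\mathrm{Sym}^-$ is the family of subsets of $\mathbb R$ generated by these intervals under $\Delta$ and $\cap$. $\mu_1$ is a measure if for every sequence of pairwise disjoint sets of $\mathrm{Sym}^-$ whose union lies in $\mathrm{Sym}^-$, only finitely many have $\mu_1$-value 1 and $\mu_1$ of the union is their number modulo 2. *)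

(* Defs.v *)
From Stdlib Require Import Reals.
Open Scope R_scope.

(* The extended line R ∪ {∞}: [None] is ∞, larger than every real. *)
Definition ext := option R.

Definition ext_lt (x y : ext) : Prop :=
  match x, y with
  | Some a, Some b => a < b
  | Some _, None => True
  | None, _ => False
  end.

Definition ext_le (x y : ext) : Prop :=
  match x, y with
  | Some a, Some b => a <= b
  | _, None => True
  | None, Some _ => False
  end.

Definition rset := R -> Prop.

Definition iv (a b : ext) : rset := fun x =>
  (ext_lt a b /\ ext_le a (Some x) /\ ext_lt (Some x) b) \/
  (ext_lt b a /\ ext_le b (Some x) /\ ext_lt (Some x) a).

Definition symdiff (A B : rset) : rset := fun x => (A x /\ ~ B x) \/ (B x /\ ~ A x).
Definition inter (A B : rset) : rset := fun x => A x /\ B x.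

Inductive SymM : rset -> Prop :=
  | SymM_iv : forall a b, SymM (iv a b)
  | SymM_symdiff : forall A B, SymM A -> SymM B -> SymM (symdiff A B)
  | SymM_inter : forall A B, SymM A -> SymM B -> SymM (inter A B)
  | SymM_ext : forall A B, SymM A -> (forall x, A x <-> B x) -> SymM B.

Fixpoint xor_upto (f : nat -> bool) (n : nat) : bool :=
  match n with
  | O => false
  | S k => xorb (xor_upto f k) (f k)
  end.

Fixpoint symdiff_upto (A : nat -> rset) (n : nat) : rset :=
  match n with
  | O => fun _ => False
  | S k => symdiff (symdiff_upto A k) (A k)
  end.

Definition bigunion (A : nat -> rset) : rset := fun x => exists n, A n x.

(* μ : Sym^- -> B_2 (values outside Sym^- are irrelevant) is a measure:
   for every sequence of pairwise disjoint sets of Sym^- whose union lies in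
   Sym^-, only finitely many have value 1 (all indices >= N give 0) and the
   value of the union is their number modulo 2. *)
Definition is_measure (mu : rset -> bool) : Prop :=
  forall A : nat -> rset,
    (forall n, SymM (A n)) ->
    (forall m n, m <> n -> forall x, A m x -> A n x -> False) ->
    SymM (bigunion A) ->
    exists N : nat,
      (forall n, (N <= n)%nat -> mu (A n) = false) /\
      mu (bigunion A) = xor_upto (fun n => mu (A n)) N.

(* Main.v *)
Require Import Defs.
From Stdlib Require Import Reals Lra Lia Classical FunctionalExtensionality PropExtensionality IndefiniteDescription.
Open Scope R_scope.
Definition E : rset := fun _ => False.
Definition U (A B : rset) : rset := fun x => A x \/ B x.

Lemma set_ext (A B : rset) : (forall x, A x <-> B x) -> A = B.
Proof. intro H; apply functional_extensionality; intro x; apply propositional_extensionality; auto. Qed.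

Lemma SymM_E : SymM E.
Proof. apply (SymM_ext (iv None None)); [constructor|]. intro x; unfold iv, E; simpl; tauto. Qed.

Lemma iv_char p q x : iv p q x <-> (ext_lt (Some x) p <-> ~ ext_lt (Some x) q).
Proof.
  unfold iv; destruct p as [a|], q as [b|]; simpl.
  - destruct (Rlt_le_dec x a), (Rlt_le_dec x b); split; intros H;
      try (destruct H as [[? [? ?]]|[? [? ?]]]); try split; intros; try lra;
      try (destruct H; lra).
    all: try (left; repeat split; lra); try (right; repeat split; lra).
  - destruct (Rlt_le_dec x a); split; intros H; try (destruct H as [[? [? ?]]|[? [? ?]]]); try split; intros; try lra; try tauto.
    all: try (right; destruct H; repeat split; auto; lra).
  - destruct (Rlt_le_dec x b); split; intros H; try (destruct H as [[? [? ?]]|[? [? ?]]]); try split; intros; try lra; try tauto.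
    all: try (left; destruct H; repeat split; auto; lra).
  - split; intros H; [destruct H as [[? ?]|[? ?]]; tauto | destruct H; tauto].
Qed.

Lemma iv_sym p q : iv p q = iv q p.
Proof. apply set_ext; intro x; unfold iv; tauto. Qed.

Lemma iv_tri c p q : iv c q = symdiff (iv c p) (iv p q).
Proof.
  apply set_ext; intro x; unfold symdiff; rewrite !iv_char.
  destruct (classic (ext_lt (Some x) c)), (classic (ext_lt (Some x) p)), (classic (ext_lt (Some x) q)); tauto.
Qed.

Lemma SymM_sdu (A : nat -> rset) n : (forall i, SymM (A i)) -> SymM (symdiff_upto A n).
Proof. intro H; induction n; simpl; [exact SymM_E | apply SymM_symdiff; auto]. Qed.

Section M.
Variable mu : rset -> bool.
Hypothesis Hmu : is_measure mu.

Lemma mu_E : mu E = false.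
Proof.
  assert (HU : SymM (bigunion (fun _ => E))).
  { replace (bigunion (fun _ => E)) with E; [exact SymM_E|].
    apply set_ext; intro x; unfold bigunion, E; split; [tauto|intros [_ H]; exact H]. }
  destruct (Hmu (fun _ => E) (fun _ => SymM_E)) as [N [HN _]].
  - intros m n _ x H; destruct H.
  - exact HU.
  - exact (HN N (le_n N)).
Qed.

Lemma xor_stable (f : nat -> bool) N : (forall n, (N <= n)%nat -> f n = false) ->
  forall M, (N <= M)%nat -> xor_upto f M = xor_upto f N.
Proof.
  intros Hf M HM; induction HM; auto.
  simpl; rewrite IHHM, Hf by lia; destruct (xor_upto f N); auto.
Qed.

Definition seq2 (A B : rset) (n : nat) : rset :=
  match n with 0%nat => A | 1%nat => B | _ => E end.

Lemma mu_U A B : SymM A -> SymM B -> (forall x, A x -> B x -> False) -> SymM (U A B) ->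
  mu (U A B) = xorb (mu A) (mu B).
Proof.
  intros HA HB Hd HU.
  assert (Heq : bigunion (seq2 A B) = U A B).
  { apply set_ext; intro x; unfold bigunion, U; split.
    - intros [[|[|n]] H]; simpl in H; tauto.
    - intros [H|H]; [exists 0%nat|exists 1%nat]; exact H. }
  destruct (Hmu (seq2 A B)) as [N [HN HS]].
  - intros [|[|n]]; simpl; auto using SymM_E.
  - intros [|[|m]] [|[|n]] Hmn x H1 H2; simpl in *; try lia; try destruct H1; try destruct H2; eauto.
  - rewrite Heq; exact HU.
  - rewrite Heq in HS; rewrite HS.
    assert (H2 : forall n, (2 <= n)%nat -> mu (seq2 A B n) = false).
    { intros [|[|n]] Hn; try lia; apply mu_E. }
    rewrite <- (xor_stable _ N HN (N + 2)) by lia.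
    rewrite (xor_stable _ 2 H2 (N + 2)) by lia.
    simpl; destruct (mu A); auto.
Qed.

Lemma mu_symdiff A B : SymM A -> SymM B -> mu (symdiff A B) = xorb (mu A) (mu B).
Proof.
  intros HA HB.
  set (D1 := inter A (symdiff A B)). set (D2 := inter B (symdiff A B)). set (I := inter A B).
  assert (S1 : SymM D1) by (apply SymM_inter; auto; apply SymM_symdiff; auto).
  assert (S2 : SymM D2) by (apply SymM_inter; auto; apply SymM_symdiff; auto).
  assert (SI : SymM I) by (apply SymM_inter; auto).
  assert (eA : A = U D1 I) by (apply set_ext; intro x; unfold U, D1, I, inter, symdiff; tauto).
  assert (eB : B = U D2 I) by (apply set_ext; intro x; unfold U, D2, I, inter, symdiff; tauto).
  assert (eS : symdiff A B = U D1 D2) by (apply set_ext; intro x; unfold U, D1, D2, inter, symdiff; tauto).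
  assert (mA : mu A = xorb (mu D1) (mu I)).
  { rewrite eA at 1; apply mu_U; auto. intros x; unfold D1, I, inter, symdiff; tauto. rewrite <- eA; auto. }
  assert (mB : mu B = xorb (mu D2) (mu I)).
  { rewrite eB at 1; apply mu_U; auto. intros x; unfold D2, I, inter, symdiff; tauto. rewrite <- eB; auto. }
  assert (mS : mu (symdiff A B) = xorb (mu D1) (mu D2)).
  { rewrite eS; apply mu_U; auto. intros x; unfold D1, D2, inter, symdiff; tauto.
    rewrite <- eS; apply SymM_symdiff; auto. }
  rewrite mA, mB, mS; destruct (mu D1), (mu D2), (mu I); auto.
Qed.

Lemma mu_iv3 c p q : mu (iv p q) = xorb (mu (iv c p)) (mu (iv c q)).
Proof.
  rewrite (iv_tri c p q), mu_symdiff by constructor.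
  destruct (mu (iv c p)), (mu (iv p q)); auto.
Qed.

Lemma mu_sdu (A : nat -> rset) n : (forall i, SymM (A i)) ->
  mu (symdiff_upto A n) = xor_upto (fun i => mu (A i)) n.
Proof.
  intro H; induction n; simpl; [exact mu_E|].
  rewrite mu_symdiff, IHn; auto using SymM_sdu.
Qed.
End M.

Definition sq (t : ext) (k : nat) : R :=
  match t with Some r => r - / INR (S k) | None => INR k end.

Lemma sq_lt t k : ext_lt (Some (sq t k)) t.
Proof.
  destruct t as [r|]; unfold sq, ext_lt; auto.
  assert (0 < / INR (S k)) by (apply Rinv_0_lt_compat, lt_0_INR; lia). lra.
Qed.

Lemma sq_arch t x : ext_lt (Some x) t -> exists k, x < sq t k.
Proof.
  destruct t as [r|]; unfold sq, ext_lt; intro H.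
  - destruct (archimed_cor1 (r - x)) as [N [HN HN0]]; [lra|].
    exists (pred N). replace (S (pred N)) with N by lia. lra.
  - destruct (INR_archimed 1 x) as [n Hn]; [lra|]. exists n; lra.
Qed.

Lemma elt_trans x y t : x <= y -> ext_lt (Some y) t -> ext_lt (Some x) t.
Proof. destruct t; simpl; auto; lra. Qed.

Fixpoint xis (f : R -> R) (s : nat -> R) (k : nat) : R :=
  match k with 0%nat => f (s 0%nat) | S k => f (Rmax (xis f s k) (s (S k))) end.

Section A.
Variable t : ext.
Variable h : R -> bool.
Variable f : R -> R.
Hypothesis Hf : forall t', ext_lt (Some t') t -> t' < f t' /\ ext_lt (Some (f t')) t /\ h (f t') = true.
Let xi := xis f (sq t).

Lemma xi_P k : ext_lt (Some (xi k)) t /\ h (xi k) = true /\ sq t k < xi k /\ xi k < xi (S k).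
Proof.
  assert (H : forall k, ext_lt (Some (xi k)) t /\ h (xi k) = true /\ sq t k < xi k).
  { clear k; intro k; induction k; unfold xi; cbn [xis].
    - destruct (Hf _ (sq_lt t 0)) as [? [? ?]]; auto.
    - destruct IHk as [H1 _].
      assert (Hm : ext_lt (Some (Rmax (xis f (sq t) k) (sq t (S k)))) t).
      { unfold Rmax; destruct Rle_dec; auto using sq_lt. }
      destruct (Hf _ Hm) as [? [? ?]]; repeat split; auto.
      eapply Rle_lt_trans; [apply Rmax_r|eauto]. }
  destruct (H k) as [? [? ?]]; repeat split; auto.
  assert (Hm : ext_lt (Some (Rmax (xis f (sq t) k) (sq t (S k)))) t).
  { unfold Rmax; destruct Rle_dec; auto using sq_lt. }
  destruct (Hf _ Hm) as [? _]. unfold xi; cbn [xis].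
  eapply Rle_lt_trans; [apply Rmax_l|eauto].
Qed.

Lemma xi_mono m n : (m <= n)%nat -> xi m <= xi n.
Proof.
  induction 1; [lra|]. destruct (xi_P m0) as [_ [_ [_ ?]]]; lra.
Qed.

Lemma xi_find x k : xi 0%nat <= x -> x < xi k -> exists j, xi j <= x /\ x < xi (S j).
Proof.
  induction k; intros H0 H1; [lra|].
  destruct (Rlt_le_dec x (xi k)); [apply IHk; auto|]. exists k; auto.
Qed.

Lemma iv_real a b x : a < b -> (iv (Some a) (Some b) x <-> a <= x < b).
Proof. intro H; unfold iv; simpl; split; [intros [[? [? ?]]|[? [? ?]]]; lra | intros; left; repeat split; lra]. Qed.

Lemma iv_real_t a x : ext_lt (Some a) t -> (iv (Some a) t x <-> a <= x /\ ext_lt (Some x) t).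
Proof.
  intro H; unfold iv; destruct t as [r|]; simpl in *;
    split; try (intros [[? [? ?]]|[? [? ?]]]; try lra; tauto); intros [? ?]; left; repeat split; auto; lra.
Qed.

Lemma xi_union : bigunion (fun k => iv (Some (xi k)) (Some (xi (S k)))) = iv (Some (xi 0%nat)) t.
Proof.
  apply set_ext; intro x. destruct (xi_P 0%nat) as [H0 _].
  rewrite iv_real_t by auto. unfold bigunion; split.
  - intros [k Hk]. destruct (xi_P k) as [_ [_ [_ Hk1]]]. rewrite iv_real in Hk by auto.
    destruct (xi_P (S k)) as [Ht _].
    split; [pose proof (xi_mono 0 k ltac:(lia)); lra|]. apply (elt_trans _ (xi (S k))); auto; lra.
  - intros [H1 H2]. destruct (sq_arch t x H2) as [k Hk].
    destruct (xi_P k) as [_ [_ [Hk2 _]]].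
    destruct (xi_find x k H1) as [j Hj]; [lra|]. exists j.
    destruct (xi_P j) as [_ [_ [_ ?]]]. rewrite iv_real by auto. lra.
Qed.
End A.

Lemma left_cont (mu : rset -> bool) (Hmu : is_measure mu) t :
  exists t', ext_lt (Some t') t /\ forall x, t' < x -> ext_lt (Some x) t -> mu (iv (Some x) t) = false.
Proof.
  set (h := fun x => mu (iv (Some x) t)).
  destruct (classic (exists t', ext_lt (Some t') t /\ forall x, t' < x -> ext_lt (Some x) t -> h x = false)) as [Hy|Hn]; [exact Hy|].
  exfalso.
  assert (Hex : forall t', exists x, ext_lt (Some t') t -> t' < x /\ ext_lt (Some x) t /\ h x = true).
  { intro t'. destruct (classic (ext_lt (Some t') t)) as [Ht|Ht]; [|exists 0; tauto].
    apply NNPP; intro Hne. apply Hn. exists t'; split; auto. intros x Hx1 Hx2.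
    destruct (h x) eqn:E'; auto. exfalso; apply Hne; exists x; auto. }
  set (f := fun t' => proj1_sig (constructive_indefinite_description _ (Hex t'))).
  assert (Hf : forall t', ext_lt (Some t') t -> t' < f t' /\ ext_lt (Some (f t')) t /\ h (f t') = true).
  { intros t' Ht. unfold f. destruct constructive_indefinite_description as [x Hx]; simpl; auto. }
  set (A := fun k => iv (Some (xis f (sq t) k)) (Some (xis f (sq t) (S k)))).
  assert (HU := xi_union t h f Hf). fold A in HU.
  destruct (Hmu A) as [N [_ HS]].
  - intro; constructor.
  - intros m n Hmn x H1 H2. unfold A in *.
    destruct (xi_P t h f Hf m) as [_ [_ [_ Hm]]]. destruct (xi_P t h f Hf n) as [_ [_ [_ Hn']]].
    rewrite iv_real in H1, H2 by auto.
    destruct (Nat.lt_total m n) as [Hl|[Hl|Hl]]; try lia;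
      [pose proof (xi_mono t h f Hf (S m) n Hl) | pose proof (xi_mono t h f Hf (S n) m Hl)]; lra.
  - rewrite HU; constructor.
  - rewrite HU in HS.
    assert (Hz : forall k, mu (A k) = false).
    { intro k. unfold A. rewrite (mu_iv3 mu Hmu t). rewrite !(iv_sym t).
      destruct (xi_P t h f Hf k) as [_ [H1 _]]. destruct (xi_P t h f Hf (S k)) as [_ [H2 _]].
      unfold h in H1, H2. rewrite H1, H2; auto. }
    assert (Hx : forall n, xor_upto (fun n => mu (A n)) n = false).
    { induction n; simpl; auto. rewrite IHn, Hz; auto. }
    rewrite Hx in HS. destruct (xi_P t h f Hf 0) as [_ [H0 _]]. unfold h in H0. congruence.
Qed.

Theorem theorem6p7 (mu : rset -> bool) (a : ext) (Hmu : is_measure mu) :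
  let g := fun t : ext => mu (iv a t) in
  (forall t : ext, exists t' : R, ext_lt (Some t') t /\
     forall xi : R, ext_lt (Some t') (Some xi) -> ext_lt (Some xi) t ->
       g (Some xi) = g t) /\
  (forall (n : nat) (aa bb : nat -> ext), (0 < n)%nat ->
     mu (symdiff_upto (fun i => iv (aa i) (bb i)) n) =
     xor_upto (fun i => xorb (g (aa i)) (g (bb i))) n).
Proof.
  intro g; split.
  - intro t. destruct (left_cont mu Hmu t) as [t' [Ht' H]]. exists t'; split; auto.
    intros x Hx1 Hx2. simpl in Hx1. pose proof (H x Hx1 Hx2) as Hz.
    rewrite (mu_iv3 mu Hmu a) in Hz. unfold g. destruct (mu (iv a (Some x))), (mu (iv a t)); auto.
  - intros n aa bb _. rewrite (mu_sdu mu Hmu) by (intro; constructor).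
    induction n; simpl; auto. rewrite IHn. f_equal. apply (mu_iv3 mu Hmu a).
Qed.
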